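(* Let $(M,J,g)$ be a metallic pseudo-Riemannian manifold with $J^2=pJ+qI$, where $p,q\in\mathbb{R}$ satisfy $p^2+4q\neq 0$. If $dJ=0$, then $\delta J=0$.
   Context: A metallic pseudo-Riemannian manifold $(M,J,g)$ is a manifold with a pseudo-Riemannian metric $g$ and a $g$-symmetric $(1,1)$-tensor field $J$ with $J^2=pJ+qI$ for real $p,q$. With $\nabla$ the Levi-Civita connection of $g$ and $\{E_i\}_{1\le i\le n}$ a local $g$-orthonormal frame, set $(dJ)(X,Y)=(\nabla_XJ)Y-(\nabla_YJ)X$ and $\delta J=-\sum_{i=1}^n(\nabla_{E_i}J)E_i$. *)

(* Defs.v *)
(* Local-coordinate model of a metallic pseudo-Riemannian manifold:
   the manifold is an open set U of R^n (a coordinate chart), tensors are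
   given by their component functions in the coordinate frame d/dx_k. *)
From HB Require Import structures.
From mathcomp Require Import all_boot all_order all_algebra.
From mathcomp Require Import all_classical all_reals all_analysis.
Set Implicit Arguments. Unset Strict Implicit. Unset Printing Implicit Defensive.
Import Order.TTheory GRing.Theory Num.Theory.
Import numFieldNormedType.Exports.
Local Open Scope classical_set_scope.
Local Open Scope ring_scope.

Section Coord.
Variables (R : realType) (n : nat).

Definition ebase (k : 'I_n) : 'rV[R]_n := delta_mx 0 k.

Definition pderiv (k : 'I_n) (f : 'rV[R]_n -> R) (x : 'rV[R]_n) : R :=
  'D_(ebase k) f x.

Fixpoint iter_pderiv (s : seq 'I_n) (f : 'rV[R]_n -> R) : 'rV[R]_n -> R :=
  match s with
  | [::] => f
  | k :: s' => pderiv k (iter_pderiv s' f)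
  end.

Definition smooth_on (U : set 'rV[R]_n) (f : 'rV[R]_n -> R) : Prop :=
  forall (s : seq 'I_n) (k : 'I_n) (x : 'rV[R]_n),
    U x -> derivable (iter_pderiv s f) x (ebase k).

Definition smooth_mx_on (U : set 'rV[R]_n) (A : 'rV[R]_n -> 'M[R]_n) : Prop :=
  forall i j : 'I_n, smooth_on U (fun x => A x i j).

Definition pseudo_riemannian_metric (U : set 'rV[R]_n)
    (g : 'rV[R]_n -> 'M[R]_n) : Prop :=
  smooth_mx_on U g /\
  forall x, U x -> (g x)^T = g x /\ g x \in unitmx.

(* metallic structure: smooth (1,1)-tensor J, g-symmetric, J^2 = pJ + qI.
   Components: (J Y)^a = sum_b J a b Y^b, g(X,Y) = sum_ab X^a g a b Y^b. *)
Definition metallic_structure (U : set 'rV[R]_n) (p q : R)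
    (g J : 'rV[R]_n -> 'M[R]_n) : Prop :=
  smooth_mx_on U J /\
  forall x, U x ->
    (J x)^T *m g x = g x *m J x /\
    J x *m J x = p *: J x + q%:M.

(* Christoffel symbols of the Levi-Civita connection:
   Gamma^a_{bc} = 1/2 sum_d g^{ad} (d_b g_{dc} + d_c g_{db} - d_d g_{bc}) *)
Definition christoffel (g : 'rV[R]_n -> 'M[R]_n) (x : 'rV[R]_n)
    (a b c : 'I_n) : R :=
  2^-1 * \sum_(d < n) invmx (g x) a d *
    (pderiv b (fun y => g y d c) x + pderiv c (fun y => g y d b) x
     - pderiv d (fun y => g y b c) x).

(* components of nabla J: (nabla_{d/dx_c} J)^a_b *)
Definition nablaJ (g J : 'rV[R]_n -> 'M[R]_n) (x : 'rV[R]_n)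
    (c a b : 'I_n) : R :=
  pderiv c (fun y => J y a b) x
  + \sum_(e < n) christoffel g x a c e * J x e b
  - \sum_(e < n) J x a e * christoffel g x e c b.

(* (dJ)(X,Y) = (nabla_X J)Y - (nabla_Y J)X; component a of
   (dJ)(d/dx_c, d/dx_b) *)
Definition dJ (g J : 'rV[R]_n -> 'M[R]_n) (x : 'rV[R]_n)
    (c b a : 'I_n) : R :=
  nablaJ g J x c a b - nablaJ g J x b a c.

(* delta J = - sum_i eps_i (nabla_{E_i} J) E_i  (pseudo-orthonormal frame),
   written frame-independently as the metric trace:
   (delta J)^a = - sum_{c,b} g^{cb} (nabla_{d/dx_c} J)^a_b *)
Definition deltaJ (g J : 'rV[R]_n -> 'M[R]_n) (x : 'rV[R]_n) (a : 'I_n) : R :=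
  - \sum_(c < n) \sum_(b < n) invmx (g x) c b * nablaJ g J x c a b.

End Coord.

(* Main.v *)
Require Import Defs.
From HB Require Import structures.
From mathcomp Require Import all_boot all_order all_algebra ring.
From mathcomp Require Import all_classical all_reals all_analysis.
Import Order.TTheory GRing.Theory Num.Theory.
Import numFieldNormedType.Exports.
Local Open Scope classical_set_scope.
Local Open Scope ring_scope.

Lemma pderivM (R : realType) n (k : 'I_n) (f h : 'rV[R]_n -> R) x :
  derivable f x (ebase R k) -> derivable h x (ebase R k) ->
  pderiv k (fun y => f y * h y) x = f x * pderiv k h x + h x * pderiv k f x.
Proof. move=> df dh; exact: (deriveM df dh). Qed.

Lemma derivableM' (R : realType) n (v : 'rV[R]_n) (f h : 'rV[R]_n -> R) x :
  derivable f x v -> derivable h x v -> derivable (fun y => f y * h y) x v.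
Proof. move=> df dh; exact: (derivableM df dh). Qed.

Lemma fsumE (R : realType) n m (h : 'I_m -> 'rV[R]_n -> R) :
  (fun y => \sum_(i < m) h i y) = \sum_(i < m) h i.
Proof. by apply/funext => y; rewrite fct_sumE. Qed.

Lemma pderiv_sum (R : realType) n m (k : 'I_n) (h : 'I_m -> 'rV[R]_n -> R) x :
  (forall i, derivable (h i) x (ebase R k)) ->
  pderiv k (fun y => \sum_(i < m) h i y) x = \sum_(i < m) pderiv k (h i) x.
Proof. by move=> dh; rewrite /pderiv fsumE derive_sum. Qed.

Lemma derivable_sum' (R : realType) n m (v : 'rV[R]_n) (h : 'I_m -> 'rV[R]_n -> R) x :
  (forall i, derivable (h i) x v) ->
  derivable (fun y => \sum_(i < m) h i y) x v.
Proof. by move=> dh; rewrite fsumE; apply: derivable_sum. Qed.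

Lemma pderiv_near (R : realType) n (U : set 'rV[R]_n) (k : 'I_n) (f h : 'rV[R]_n -> R) x :
  open U -> U x -> (forall y, U y -> f y = h y) -> pderiv k f x = pderiv k h x.
move=> oU Ux fh; rewrite /pderiv; apply: near_eq_derive.
have nU : nbhs x U by apply: open_nbhs_nbhs.
move: nU; apply: filterS => y Uy; exact: fh.
Qed.

Lemma trace_zero (R : fieldType) n (A J : 'M[R]_n) p q :
  p ^+ 2 + 4 * q != 0 -> J *m J = p *: J + q%:M ->
  A *m J + J *m A = p *: A -> \tr A = 0.
Proof.
move=> hpq hJ hE.
have h1 : 2 * \tr (A *m J) = p * \tr A.
  by rewrite -[p * _]mxtraceZ -hE mxtraceD [\tr (J *m A)]mxtrace_mulC mulr2n mulrDl !mul1r.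
have h2 : J *m A *m J = - q *: A.
  have e : J *m A *m J + (p *: (J *m A) + q *: A) = p *: (J *m A).
    have := congr1 (mulmx J) hE.
    rewrite mulmxDr mulmxA (mulmxA J J A) hJ mulmxDl -scalemxAl mul_scalar_mx.
    by rewrite scalemxAr.
  apply/eqP; rewrite -subr_eq0 -(subrr (p *: (J *m A))) -{1}e.
  by apply/eqP; rewrite scaleNr opprK [p *: _ + _]addrC addrA addrK.
have h3 : \tr (J *m A *m J) = p * \tr (A *m J) + q * \tr A.
  rewrite mxtrace_mulC mulmxA hJ mulmxDl mxtraceD -scalemxAl mxtraceZ.
  by rewrite mul_scalar_mx mxtraceZ mxtrace_mulC.
rewrite h2 mxtraceZ in h3.
have : (p ^+ 2 + 4 * q) * \tr A = 0.
  have -> : (p ^+ 2 + 4 * q) * \tr A = p * (2 * \tr (A *m J)) - 2 * (- q * \tr A - q * \tr A).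
    by rewrite h1; ring.
  by rewrite h3; ring.
by move/eqP; rewrite mulf_eq0 (negbTE hpq) /= => /eqP.
Qed.

Lemma zmod_id1 (V : zmodType) (a b c d e f : V) :
  a + (b + c) - d + (e + d - (f + c)) = a + e + b - f.
Proof.
rewrite opprD -!addrA; congr (a + _).
rewrite [RHS]addrCA; congr (b + _).
rewrite [e + _]addrCA addKr addrCA; congr (e + _).
by rewrite addrCA subrr addr0.
Qed.

Lemma zmod_id2 (V : zmodType) (a x y z w : V) :
  a + (x + y) - (z + w) + z - x = a + y - w.
Proof.
rewrite opprD -!addrA; congr (a + _).
rewrite [- w + _]addrCA addKr.
rewrite addrCA; congr (y + _).
by rewrite addrCA subrr addr0.
Qed.

Lemma anticomm_lemma (R : comRingType) n (J D G : 'M[R]_n) p q :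
  J *m J = p *: J + q%:M ->
  D *m J + J *m D = p *: D ->
  (D + G *m J - J *m G) *m J + J *m (D + G *m J - J *m G) = p *: (D + G *m J - J *m G).
Proof.
move=> hJ hD.
rewrite !mulmxDl !mulmxDr !mulNmx !mulmxN -!mulmxA hJ !mulmxA hJ.
rewrite mulmxDr mulmxDl -scalemxAr -scalemxAl mul_mx_scalar mul_scalar_mx.
by rewrite zmod_id1 !scalerDr scalerN -hD.
Qed.

Lemma sym_lemma (R : comRingType) n (g J D P G : 'M[R]_n) :
 g^T = g -> J^T *m g = g *m J -> P = G^T *m g + g *m G ->
 J^T *m P + D^T *m g = g *m D + P *m J ->
 (g *m (D + G *m J - J *m G))^T = g *m (D + G *m J - J *m G).
Proof.
move=> K4 K1 K2 K3.
have eD : D^T *m g = g *m D + P *m J - J^T *m P.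
  by rewrite -K3 [J^T *m P + _]addrC addrK.
rewrite trmx_mul K4 !raddfD /= raddfN /= !trmx_mul.
rewrite !mulmxDl !mulNmx eD K2 !mulmxDl !mulmxDr !mulmxA K1.
rewrite -[G^T *m J^T *m g]mulmxA K1 mulmxA mulmxN.
by rewrite [g *m (J *m G)]mulmxA zmod_id2.
Qed.
Lemma pderiv_lin (R : realType) n (k : 'I_n) (f : 'rV[R]_n -> R) (p c : R) x :
  derivable f x (ebase R k) ->
  pderiv k (fun y => p * f y + c) x = p * pderiv k f x.
Proof.
move=> df; rewrite /pderiv.
have dp : derivable (fun y : 'rV[R]_n => p * f y) x (ebase R k).
  exact: (@derivableM' R n _ (cst p) f x (derivable_cst p x _) df).
have -> : (fun y => p * f y + c) = (fun y => p * f y) + cst c by [].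
rewrite (deriveD dp (derivable_cst c x _)) derive_cst addr0.
have := @pderivM R n k (cst p) f x (derivable_cst p x _) df.
rewrite /pderiv => ->; by rewrite derive_cst mulr0 addr0.
Qed.

Lemma pderiv_sumM (R : realType) n m (k : 'I_n) (f h : 'I_m -> 'rV[R]_n -> R) x :
  (forall e, derivable (f e) x (ebase R k)) -> (forall e, derivable (h e) x (ebase R k)) ->
  pderiv k (fun y => \sum_(e < m) f e y * h e y) x =
  \sum_(e < m) (f e x * pderiv k (h e) x + h e x * pderiv k (f e) x).
Proof.
move=> df dh; rewrite (@pderiv_sum R n m k (fun e y => f e y * h e y)); last first.
  by move=> e; apply: derivableM'.
by apply: eq_bigr => e _; rewrite pderivM.
Qed.

Arguments pderiv_near {R n U k f h x}.

Theorem mainTheorem2 (R : realType) (n : nat) (U : set 'rV[R]_n)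
    (g J : 'rV[R]_n -> 'M[R]_n) (p q : R) :
  open U ->
  pseudo_riemannian_metric U g ->
  metallic_structure U p q g J ->
  p ^+ 2 + 4 * q != 0 ->
  (forall x, U x -> forall c b a : 'I_n, dJ g J x c b a = 0) ->
  forall x, U x -> forall a : 'I_n, deltaJ g J x a = 0.
Proof.
move=> oU [gsm gU] [Jsm JU] hpq hdJ x Ux.
have dJd : forall i j k, derivable (fun y => J y i j) x (ebase R k).
  by move=> i j k; exact: (Jsm i j [::] k x Ux).
have dgd : forall i j k, derivable (fun y => g y i j) x (ebase R k).
  by move=> i j k; exact: (gsm i j [::] k x Ux).
have [gsym gunit] := gU x Ux.
have [K1 hJ] := JU x Ux.
pose D c := \matrix_(i, j) pderiv c (fun y => J y i j) x.
pose dG c := \matrix_(i, j) pderiv c (fun y => g y i j) x.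
pose Gm c := \matrix_(i, j) christoffel g x i c j.
pose T c := \matrix_(d, b) (pderiv c (fun y => g y d b) x
   + pderiv b (fun y => g y d c) x - pderiv d (fun y => g y c b) x).
pose A c := \matrix_(i, j) nablaJ g J x c i j.
have Adef : forall c, A c = D c + Gm c *m J x - J x *m Gm c.
  move=> c; apply/matrixP => i j; rewrite !mxE /nablaJ.
  by congr (_ + _ - _); apply: eq_bigr => e _; rewrite !mxE.
have F1 : forall c, D c *m J x + J x *m D c = p *: D c.
  move=> c; apply/matrixP => i j.
  have e1 : pderiv c (fun y => \sum_(e < n) J y i e * J y e j) x =
            pderiv c (fun y => p * J y i j + q *+ (i == j)) x.
    apply: (pderiv_near oU Ux) => y Uy.
    by have := congr1 (fun M : 'M[R]_n => M i j) (JU y Uy).2; rewrite !mxE.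
  rewrite pderiv_lin // (@pderiv_sumM R n n c (fun e y => J y i e) (fun e y => J y e j) x) in e1 => //.
  rewrite !mxE -big_split /= -e1; apply: eq_bigr => e _; rewrite !mxE.
  by rewrite addrC [J x e j * _]mulrC.
have dGsym : forall k i j, pderiv k (fun y => g y i j) x = pderiv k (fun y => g y j i) x.
  move=> k i j; apply: (pderiv_near oU Ux) => y Uy.
  by have := congr1 (fun M : 'M[R]_n => M j i) (gU y Uy).1; rewrite mxE.
have GmE : forall c, Gm c = 2^-1 *: (invmx (g x) *m T c).
  move=> c; apply/matrixP => i j; rewrite !mxE /christoffel; congr (_ * _).
  by apply: eq_bigr => d _; rewrite !mxE.
have K2 : forall c, dG c = (Gm c)^T *m g x + g x *m Gm c.
  move=> c.
  have gG : g x *m Gm c = 2^-1 *: T c.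
    by rewrite GmE -scalemxAr mulmxA mulmxV // mul1mx.
  have Gg : (Gm c)^T *m g x = 2^-1 *: (T c)^T.
    by rewrite -{1}gsym -trmx_mul gG linearZ.
  rewrite gG Gg -scalerDr; apply/matrixP => a b; rewrite !mxE.
  rewrite (dGsym c b a) (dGsym b c a) (dGsym a c b).
  by field.
have K3 : forall c, (J x)^T *m dG c + (D c)^T *m g x = g x *m D c + dG c *m J x.
  move=> c; apply/matrixP => a b.
  have e1 : pderiv c (fun y => \sum_(e < n) J y e a * g y e b) x =
            pderiv c (fun y => \sum_(e < n) g y a e * J y e b) x.
    apply: (pderiv_near oU Ux) => y Uy.
    have := congr1 (fun M : 'M[R]_n => M a b) (JU y Uy).1; rewrite !mxE => <-.
    by apply: eq_bigr => e _; rewrite ?mxE.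
  rewrite (@pderiv_sumM R n n c (fun e y => J y e a) (fun e y => g y e b) x) // in e1.
  rewrite (@pderiv_sumM R n n c (fun e y => g y a e) (fun e y => J y e b) x) // in e1.
  rewrite !mxE -!big_split /=.
  transitivity (\sum_(e < n) (J x e a * pderiv c (fun y => g y e b) x +
                             g x e b * pderiv c (fun y => J y e a) x)).
    by apply: eq_bigr => e _; rewrite !mxE [g x e b * _]mulrC.
  rewrite e1; apply: eq_bigr => e _; rewrite !mxE.
  by rewrite [J x e b * _]mulrC.
have F6 : forall c, A c *m J x + J x *m A c = p *: A c.
  by move=> c; rewrite Adef; exact: (@anticomm_lemma _ n (J x) (D c) (Gm c) p q hJ (F1 c)).
have F4 : forall c, (g x *m A c)^T = g x *m A c.
  by move=> c; rewrite Adef; exact: (@sym_lemma _ n (g x) (J x) (D c) (dG c) (Gm c) gsym K1 (K2 c) (K3 c)).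
have tr0 : forall z, \tr (A z) = 0.
  by move=> z; apply: trace_zero hpq hJ (F6 z).
pose dv := \col_a deltaJ g J x a.
have dvE : dv = - \sum_(c < n) (A c *m (row c (invmx (g x)))^T).
  apply/matrixP => a i; rewrite !mxE /deltaJ; congr (- _).
  rewrite summxE; apply: eq_bigr => c _; rewrite !mxE.
  by apply: eq_bigr => b _; rewrite !mxE mulrC.
have gdv : g x *m dv = - \sum_(c < n) (row c (A c))^T.
  rewrite dvE mulmxN mulmx_sumr; congr (- _); apply: eq_bigr => c _.
  by rewrite mulmxA -F4 -trmx_mul -row_mul mulKmx.
have gdv0 : g x *m dv = 0.
  rewrite gdv; apply/matrixP => z i; rewrite !mxE summxE.
  transitivity (- \tr (A z)); last by rewrite tr0 oppr0.
  congr (- _); rewrite /mxtrace; apply: eq_bigr => c _; rewrite !mxE.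
  by apply/eqP; rewrite -subr_eq0; apply/eqP; exact: (hdJ x Ux c z c).
have dv0 : dv = 0 by rewrite -(mulKmx gunit dv) gdv0 mulmx0.
move=> a; have := congr1 (fun M : 'cV[R]_n => M a 0) dv0; rewrite !mxE.
by [].
Qed.
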